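(* Let $\kappa\in\mathbb{R}$ and $m>0$, and let $L_{\kappa,m}$ be as defined in the context. Let $0<\rho_1^*<\rho_2^*<\dots<R_\kappa$ be the points in $(0,R_\kappa)$ at which $L_{\kappa,m}$ attains local maxima or minima. Then the sequence $|L_{\kappa,m}(\rho_i^* )|$ is decreasing in $i$. Moreover, the first local maximum $\rho_1^*$ satisfies $\rho_1^*\ge\sin_\kappa^{-1}(m)$.
   Context: Define $\sin_\kappa(\rho)=\sin(\sqrt{\kappa}\rho)/\sqrt{\kappa}$ if $\kappa>0$, $\sin_\kappa(\rho)=\rho$ if $\kappa=0$, $\sin_\kappa(\rho)=\sinh(\sqrt{-\kappa}\rho)/\sqrt{-\kappa}$ if $\kappa<0$; $\cos_\kappa=(\sin_\kappa)'$, $\cot_\kappa=\cos_\kappa/\sin_\kappa$, $\tan_\kappa=1/\cot_\kappa$. Let $R_\kappa=\infty$ if $\kappa\le0$ and $R_\kappa=\pi/(2\sqrt{\kappa})$ if $\kappa>0$; $\sin_\kappa^{-1}$ denotes the inverse of $\sin_\kappa$ on $[0,R_\kappa)$. $L_{\kappa,m}$ is a solution of \[\sin_\kappa^2(\rho)L''(\rho)+\sin_\kappa(\rho)\cos_\kappa(\rho)L'(\rho)+(\sin_\kappa^2(\rho)-m^2)L(\rho)=0\] that is well defined (regular) at $\rho=0$ and positive on some interval $(0,\varepsilon)$ (so $L_{\kappa,m}(0)=0$ for $m>0$). *)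

(* Defs.v *)
From Stdlib Require Import Reals Lra.
From Coquelicot Require Import Coquelicot.
Open Scope R_scope.

Definition sinK (k rho : R) : R :=
  if Rlt_dec 0 k then sin (sqrt k * rho) / sqrt k
  else if Req_EM_T k 0 then rho
  else sinh (sqrt (- k) * rho) / sqrt (- k).

Definition cosK (k rho : R) : R :=
  if Rlt_dec 0 k then cos (sqrt k * rho)
  else if Req_EM_T k 0 then 1
  else cosh (sqrt (- k) * rho).

Definition RK (k : R) : Rbar :=
  if Rlt_dec 0 k then Finite (PI / (2 * sqrt k)) else p_infty.

Definition asinh (x : R) : R := ln (x + sqrt (x ^ 2 + 1)).

(** sin_kappa^{-1} : inverse of sin_kappa on [0, R_kappa).
    For kappa > 0 and arguments >= 1/sqrt kappa (outside the range of
    sin_kappa on [0,R_kappa)), Stdlib's asin clamps to pi/2, so the value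
    is R_kappa. *)
Definition sinK_inv (k x : R) : R :=
  if Rlt_dec 0 k then asin (sqrt k * x) / sqrt k
  else if Req_EM_T k 0 then x
  else asinh (sqrt (- k) * x) / sqrt (- k).

Definition inDom (k rho : R) : Prop := 0 < rho /\ Rbar_lt rho (RK k).

Definition local_max (L : R -> R) (rho : R) : Prop :=
  exists d : R, 0 < d /\ forall x, Rabs (x - rho) < d -> L x <= L rho.
Definition local_min (L : R -> R) (rho : R) : Prop :=
  exists d : R, 0 < d /\ forall x, Rabs (x - rho) < d -> L rho <= L x.
Definition local_extremum (L : R -> R) (rho : R) : Prop :=
  local_max L rho \/ local_min L rho.

Definition is_L (k m : R) (L : R -> R) : Prop :=
  (forall rho, inDom k rho ->
     ex_derive L rho /\ ex_derive (Derive L) rho /\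
     (sinK k rho) ^ 2 * Derive_n L 2 rho
     + sinK k rho * cosK k rho * Derive L rho
     + ((sinK k rho) ^ 2 - m ^ 2) * L rho = 0)
  /\ filterlim L (at_right 0) (locally (L 0))
  /\ (exists eps : R, 0 < eps /\ forall rho, 0 < rho < eps -> 0 < L rho).

(* Main.v *)
Require Import Defs.
From Stdlib Require Import Reals Lra.
From Coquelicot Require Import Coquelicot.
Open Scope R_scope.

Lemma sinK_deriv (k x : R) : is_derive (sinK k) x (cosK k x).
Proof.
  unfold sinK, cosK. destruct (Rlt_dec 0 k) as [Hk|Hk].
  - assert (Hs: 0 < sqrt k) by (apply sqrt_lt_R0; lra).
    auto_derive; auto; field; lra.
  - destruct (Req_EM_T k 0). + auto_derive; auto; ring.
    + assert (Hs: 0 < sqrt (-k)) by (apply sqrt_lt_R0; lra).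
      unfold sinh, cosh. auto_derive; auto; field; lra.
Qed.

Lemma cosK_cont (k x : R) : continuity_pt (cosK k) x.
Proof.
  unfold cosK. destruct (Rlt_dec 0 k).
  - apply continuity_pt_comp with (f1 := fun x => sqrt k * x) (f2 := cos).
    reg. apply continuity_cos.
  - destruct (Req_EM_T k 0). apply continuity_pt_const; intros a b; auto.
    unfold cosh. reg.
Qed.

Lemma D_eq (f : R -> R) (x l1 l2 : R) : is_derive f x l1 -> l1 = l2 -> is_derive f x l2.
Proof. intros H ->; exact H. Qed.

Lemma D_mult (f g : R -> R) (x df dg : R) : is_derive f x df -> is_derive g x dg ->
  is_derive (fun t => f t * g t) x (df * g x + f x * dg).
Proof. rewrite !is_derive_Reals. intros A B. exact (derivable_pt_lim_mult f g x df dg A B). Qed.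

Lemma D_plus (f g : R -> R) (x df dg : R) : is_derive f x df -> is_derive g x dg ->
  is_derive (fun t => f t + g t) x (df + dg).
Proof. rewrite !is_derive_Reals. intros A B. exact (derivable_pt_lim_plus f g x df dg A B). Qed.

Lemma D_opp (f : R -> R) (x df : R) : is_derive f x df ->
  is_derive (fun t => - f t) x (- df).
Proof. rewrite !is_derive_Reals. intros A. exact (derivable_pt_lim_opp f x df A). Qed.

Lemma D_comp (f g : R -> R) (x df dg : R) : is_derive f (g x) df -> is_derive g x dg ->
  is_derive (fun t => f (g t)) x (df * dg).
Proof. rewrite !is_derive_Reals. intros A B. exact (derivable_pt_lim_comp g f x dg df B A). Qed.



Lemma D_cont (f : R -> R) (x df : R) : is_derive f x df -> continuity_pt f x.
Proof. intros A. apply is_derive_Reals in A. apply derivable_continuous_pt. exists df. exact A. Qed.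

Lemma incr_le (f f' : R -> R) (a b : R) : a <= b ->
  (forall x, a <= x <= b -> is_derive f x (f' x)) ->
  (forall x, a < x < b -> 0 <= f' x) -> f a <= f b.
Proof.
  intros Hab Hd Hp. destruct (Req_dec a b) as [->|Hne]. lra.
  destruct (MVT_cor2 f f' a b) as [c [Hc1 Hc2]]. lra.
  intros c Hc. apply is_derive_Reals, Hd, Hc.
  specialize (Hp c Hc2). nra.
Qed.

Lemma incr_lt (f f' : R -> R) (a b : R) : a < b ->
  (forall x, a <= x <= b -> is_derive f x (f' x)) ->
  (forall x, a < x < b -> 0 < f' x) -> f a < f b.
Proof.
  intros Hab Hd Hp.
  destruct (MVT_cor2 f f' a b) as [c [Hc1 Hc2]]. lra.
  intros c Hc. apply is_derive_Reals, Hd, Hc.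
  specialize (Hp c Hc2). nra.
Qed.

Lemma loc_const_deriv (f : R -> R) (a b t c0 l : R) : a < t < b ->
  (forall x, a < x < b -> f x = c0) -> is_derive f t l -> l = 0.
Proof.
  intros Ht Hc Hd.
  assert (H0 : is_derive f t 0).
  { apply (is_derive_ext_loc (fun _ => c0)).
    - assert (Hp : 0 < Rmin (t - a) (b - t)) by (apply Rmin_pos; lra).
      exists (mkposreal _ Hp). intros y Hy. simpl in Hy.
      unfold ball in Hy; simpl in Hy; unfold AbsRing_ball, abs, minus, plus, opp in Hy; simpl in Hy.
      symmetry. apply Hc.
      assert (Hm1 := Rmin_l (t - a) (b - t)). assert (Hm2 := Rmin_r (t - a) (b - t)).
      apply Rabs_def2 in Hy. lra.
    - apply (is_derive_const (V:=R_NormedModule) c0 t). }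
  apply is_derive_unique in Hd. apply is_derive_unique in H0. congruence.
Qed.

Lemma fermat (L : R -> R) (r l : R) : local_extremum L r -> is_derive L r l -> l = 0.
Proof.
  intros He Hd. apply is_derive_Reals in Hd.
  assert (pr : derivable_pt L r) by (exists l; exact Hd).
  rewrite <- (derive_pt_eq_0 L r l pr Hd).
  destruct He as [[d [Hd0 Hm]] | [d [Hd0 Hm]]].
  - apply (deriv_maximum L (r - d) (r + d) r pr); try lra.
    intros x H1 H2. apply Hm. apply Rabs_def1; lra.
  - apply (deriv_minimum L (r - d) (r + d) r pr); try lra.
    intros x H1 H2. apply Hm. apply Rabs_def1; lra.
Qed.

Lemma dom_facts (k x : R) : inDom k x -> 0 < sinK k x /\ 0 < cosK k x.
Proof.
  intros [Hx Hr]. unfold inDom, RK in *. unfold sinK, cosK.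
  destruct (Rlt_dec 0 k) as [Hk|Hk].
  - simpl in Hr. assert (Hs: 0 < sqrt k) by (apply sqrt_lt_R0; lra).
    assert (H1 : sqrt k * x < PI / 2).
    { apply (Rmult_lt_compat_l (sqrt k)) in Hr; auto.
      replace (sqrt k * (PI / (2 * sqrt k))) with (PI/2) in Hr by (field; lra). exact Hr. }
    assert (H2 : 0 < sqrt k * x) by nra. assert (HPI := PI_RGT_0).
    split. apply Rdiv_lt_0_compat; auto. apply sin_gt_0; lra.
    apply cos_gt_0; lra.
  - destruct (Req_EM_T k 0). split; lra.
    assert (Hs: 0 < sqrt (-k)) by (apply sqrt_lt_R0; lra).
    assert (H2 : 0 < sqrt (-k) * x) by nra.
    unfold sinh, cosh. split.
    + apply Rdiv_lt_0_compat; auto. assert (exp (- (sqrt (-k) * x)) < exp (sqrt (- k) * x)) by (apply exp_increasing; lra). lra.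
    + assert (0 < exp (sqrt (-k) * x)) by apply exp_pos. assert (0 < exp (- (sqrt (-k) * x))) by apply exp_pos. lra.
Qed.

Lemma dom_down (k x y : R) : inDom k y -> 0 < x -> x <= y -> inDom k x.
Proof.
  intros [Hy Hr] Hx Hxy. split; auto. unfold RK in *. destruct (Rlt_dec 0 k); simpl in *; auto. lra.
Qed.

Lemma sinK0 (k : R) : sinK k 0 = 0.
Proof.
  unfold sinK. destruct (Rlt_dec 0 k). rewrite Rmult_0_r, sin_0. unfold Rdiv; ring.
  destruct (Req_EM_T k 0). auto. unfold sinh. rewrite Rmult_0_r, Ropp_0. unfold Rdiv; ring.
Qed.

Lemma sinK_lt (k x y : R) : inDom k y -> 0 < x -> x < y -> sinK k x < sinK k y.
Proof.
  intros Hy Hx Hxy. apply (incr_lt (sinK k) (cosK k)); auto.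
  intros; apply sinK_deriv.
  intros z Hz. apply (dom_facts k z). apply (dom_down k z y); auto; lra.
Qed.

Lemma sinK_le (k x y : R) : inDom k y -> 0 < x -> x <= y -> sinK k x <= sinK k y.
Proof. intros Hy Hx Hxy. destruct (Req_dec x y) as [->|h]. lra. left; apply sinK_lt; auto; lra. Qed.

Lemma sinh_asinh (y : R) : sinh (asinh y) = y.
Proof.
  unfold sinh, asinh.
  assert (Hs : sqrt (y ^ 2 + 1) * sqrt (y ^ 2 + 1) = y ^ 2 + 1) by (apply sqrt_sqrt; nra).
  assert (Hs0 : 0 <= sqrt (y ^ 2 + 1)) by apply sqrt_pos.
  assert (Hu : 0 < y + sqrt (y ^ 2 + 1)) by nra.
  rewrite exp_Ropp, exp_ln by auto.
  assert (Hi : / (y + sqrt (y ^ 2 + 1)) = sqrt (y ^ 2 + 1) - y).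
  { apply (Rmult_eq_reg_l (y + sqrt (y ^ 2 + 1))). rewrite Rinv_r by lra. nra. lra. }
  rewrite Hi. lra.
Qed.

Lemma sinh_lt (x y : R) : x < y -> sinh x < sinh y.
Proof.
  intros H. unfold sinh. assert (exp x < exp y) by (apply exp_increasing; lra).
  assert (exp (- y) < exp (-x)) by (apply exp_increasing; lra). lra.
Qed.

Lemma inv_le (k m r : R) : 0 < m -> inDom k r -> m < sinK k r -> sinK_inv k m <= r.
Proof.
  intros Hm Hr Hlt. destruct Hr as [Hr0 Hr]. unfold sinK_inv, sinK, RK in *.
  destruct (Rlt_dec 0 k) as [Hk|Hk].
  - simpl in Hr. assert (Hs: 0 < sqrt k) by (apply sqrt_lt_R0; lra).
    assert (H1 : sqrt k * r < PI / 2).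
    { apply (Rmult_lt_compat_l (sqrt k)) in Hr; auto.
      replace (sqrt k * (PI / (2 * sqrt k))) with (PI/2) in Hr by (field; lra). exact Hr. }
    assert (H2 : 0 < sqrt k * r) by nra.
    assert (Hv : sqrt k * m < sin (sqrt k * r)).
    { apply (Rmult_lt_compat_l (sqrt k)) in Hlt; auto.
      replace (sqrt k * (sin (sqrt k * r) / sqrt k)) with (sin (sqrt k * r)) in Hlt by (field; lra). exact Hlt. }
    assert (Hs1 := SIN_bound (sqrt k * r)).
    assert (Ha : asin (sqrt k * m) <= sqrt k * r).
    { destruct (Rle_lt_dec (asin (sqrt k * m)) (sqrt k * r)) as [h|h]; auto.
      assert (hb := asin_bound (sqrt k * m)).
      assert (sin (sqrt k * r) < sin (asin (sqrt k * m))) by (apply sin_increasing_1; lra).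
      rewrite sin_asin in H by nra. lra. }
    apply (Rmult_le_reg_l (sqrt k)); auto.
    replace (sqrt k * (asin (sqrt k * m) / sqrt k)) with (asin (sqrt k * m)) by (field; lra). exact Ha.
  - destruct (Req_EM_T k 0). lra.
    assert (Hs: 0 < sqrt (-k)) by (apply sqrt_lt_R0; lra).
    assert (Hv : sqrt (-k) * m < sinh (sqrt (-k) * r)).
    { apply (Rmult_lt_compat_l (sqrt (-k))) in Hlt; auto.
      replace (sqrt (-k) * (sinh (sqrt (-k) * r) / sqrt (-k))) with (sinh (sqrt (-k) * r)) in Hlt by (field; lra). exact Hlt. }
    assert (Ha : asinh (sqrt (-k) * m) <= sqrt (-k) * r).
    { destruct (Rle_lt_dec (asinh (sqrt (-k) * m)) (sqrt (-k) * r)) as [h|h]; auto.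
      apply sinh_lt in h. rewrite sinh_asinh in h. lra. }
    apply (Rmult_le_reg_l (sqrt (-k))); auto.
    replace (sqrt (-k) * (asinh (sqrt (-k) * m) / sqrt (-k))) with (asinh (sqrt (-k) * m)) by (field; lra). exact Ha.
Qed.
Lemma cont_extract (f : R -> R) (x0 e : R) : continuity_pt f x0 -> 0 < e ->
  exists d, 0 < d /\ forall y, Rabs (y - x0) < d -> Rabs (f y - f x0) < e.
Proof.
  intros H He. destruct (H e He) as [d [Hd H']]. exists d; split; auto.
  intros y Hy. destruct (Req_dec y x0) as [->|Hne]. unfold Rminus; rewrite Rplus_opp_r, Rabs_R0; auto.
  apply (H' y). split. split. exact I. auto. exact Hy.
Qed.
Lemma right_extract (f : R -> R) (x0 l e : R) : filterlim f (at_right x0) (locally l) -> 0 < e ->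
  exists d, 0 < d /\ forall y, Rabs (y - x0) < d -> x0 < y -> Rabs (f y - l) < e.
Proof.
  intros H He.
  assert (Hl : locally l (fun y => Rabs (y - l) < e)).
  { exists (mkposreal e He). intros y Hy. exact Hy. }
  destruct (H _ Hl) as [d Hd]. exists d. split. apply cond_pos.
  intros y Hy Hy2. apply (Hd y); auto.
Qed.

Lemma le_div (a b s : R) : 0 < s -> a * s <= b -> a <= b / s.
Proof. intros Hs H. apply (Rmult_le_reg_r s); auto. unfold Rdiv. rewrite Rmult_assoc, Rinv_l by lra. lra. Qed.

Lemma L_deriv (k m : R) (L : R -> R) (x : R) : is_L k m L -> inDom k x -> is_derive L x (Derive L x).
Proof. intros [H1 _] Hx. apply Derive_correct. apply (H1 x Hx). Qed.

Lemma p_deriv (k m : R) (L : R -> R) (x : R) : is_L k m L -> inDom k x ->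
  is_derive (fun t => sinK k t * Derive L t) x ((m ^ 2 - sinK k x ^ 2) * L x / sinK k x).
Proof.
  intros HL Hx. destruct (dom_facts k x Hx) as [HS HC].
  destruct HL as [H1 _]. destruct (H1 x Hx) as [_ [Hd2 Hode]].
  change (Derive_n L 2 x) with (Derive (Derive L) x) in Hode.
  eapply D_eq. apply D_mult. apply sinK_deriv. apply Derive_correct, Hd2.
  replace ((m ^ 2 - sinK k x ^ 2) * L x) with (sinK k x * (cosK k x * Derive L x + sinK k x * Derive (Derive L) x)) by nra.
  field. lra.
Qed.

Lemma logdiv (k m : R) (L : R -> R) (t0 c : R) : is_L k m L -> inDom k t0 -> 0 < c ->
  (forall t, 0 < t <= t0 -> Derive L t <= - c / sinK k t) -> False.
Proof.
  intros HL Ht0 Hc Hb.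
  assert (HL' := HL). destruct HL' as [H1 [Hlim _]].
  destruct Ht0 as [Ht00 Ht0r].
  destruct (continuity_ab_maj (cosK k) 0 t0) as [Mx [HM HMx]]. lra. intros; apply cosK_cont.
  assert (HCt0 : 0 < cosK k t0) by (apply (dom_facts k t0); split; auto).
  assert (HMt := HM t0 (conj (Rlt_le _ _ Ht00) (Rle_refl _))).
  set (M := cosK k Mx) in *.
  set (c' := c / M).
  assert (Hc' : 0 < c') by (unfold c'; apply Rdiv_lt_0_compat; lra).
  set (g := fun t => L t + c' * ln (sinK k t)).
  set (g' := fun t => Derive L t + c' * (/ sinK k t * cosK k t)).
  assert (Hdom : forall t, 0 < t <= t0 -> inDom k t).
  { intros t Ht. apply (dom_down k t t0); [split; auto | lra | lra]. }
  assert (Hg : forall t, 0 < t <= t0 -> is_derive g t (g' t)).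
  { intros t Ht. destruct (dom_facts k t (Hdom t Ht)) as [HS HC].
    unfold g, g'. apply D_plus. apply (L_deriv k m); auto.
    apply is_derive_scal. apply (D_comp ln (sinK k)). apply is_derive_ln; auto. apply sinK_deriv. }
  assert (Hgm : forall t, 0 < t <= t0 -> g t0 <= g t).
  { intros t Ht.
    assert (- g t <= - g t0); [|lra].
    apply (incr_le (fun x => - g x) (fun x => - g' x)). lra.
    intros x Hx. apply D_opp. apply Hg. lra.
    intros x Hx. destruct (dom_facts k x (Hdom x ltac:(lra))) as [HS HC].
    assert (h1 := Hb x ltac:(lra)).
    assert (h2 : c' * cosK k x <= c).
    { unfold c'. assert (cosK k x <= M) by (apply HM; lra).
      assert (c' * M = c) by (unfold c'; field; lra).
      assert (c' * cosK k x <= c' * M) by (apply Rmult_le_compat_l; lra). fold c'. lra. }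
    unfold g'.
    assert (h3 : c' * (/ sinK k x * cosK k x) <= c / sinK k x).
    { unfold Rdiv. rewrite <- Rmult_assoc, (Rmult_comm c' (/ sinK k x)), Rmult_assoc, (Rmult_comm c).
      apply Rmult_le_compat_l. left; apply Rinv_0_lt_compat; auto. exact h2. }
    unfold Rdiv in h1, h3. lra. }
  destruct (right_extract L 0 (L 0) 1 Hlim Rlt_0_1) as [d1 [Hd1 Hr1]].
  set (A := (g t0 - L 0 - 1) / c').
  destruct (cont_extract (sinK k) 0 (exp A) (D_cont _ _ _ (sinK_deriv k 0)) (exp_pos A)) as [d2 [Hd2 Hr2]].
  set (t := Rmin d1 (Rmin d2 t0) / 2).
  assert (Hm1 := Rmin_l d1 (Rmin d2 t0)). assert (Hm2 := Rmin_r d1 (Rmin d2 t0)).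
  assert (Hm3 := Rmin_l d2 t0). assert (Hm4 := Rmin_r d2 t0).
  assert (Hpos : 0 < Rmin d1 (Rmin d2 t0)) by (repeat apply Rmin_pos; lra).
  assert (Ht : 0 < t <= t0) by (unfold t; lra).
  assert (Habs : Rabs (t - 0) < t0 /\ Rabs (t - 0) = t) by (rewrite Rminus_0_r, Rabs_right by lra; unfold t; lra).
  destruct Habs as [_ Habs].
  assert (HL1 := Hr1 t ltac:(rewrite Habs; unfold t; lra) ltac:(lra)).
  assert (HS2 := Hr2 t ltac:(rewrite Habs; unfold t; lra)).
  rewrite sinK0, Rminus_0_r in HS2.
  destruct (dom_facts k t (Hdom t Ht)) as [HS HC].
  rewrite Rabs_right in HS2 by lra.
  assert (Hln : ln (sinK k t) < A) by (rewrite <- (ln_exp A); apply ln_increasing; auto).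
  assert (Hc'A : c' * A = g t0 - L 0 - 1) by (unfold A; field; lra).
  assert (h := Hgm t Ht). unfold g in h at 2.
  assert (c' * ln (sinK k t) < c' * A) by (apply Rmult_lt_compat_l; auto).
  apply Rabs_def2 in HL1. lra.
Qed.

Lemma core (k m : R) (L : R -> R) (b : R) : 0 < m -> is_L k m L -> inDom k b -> sinK k b <= m ->
  0 < L b /\ 0 < Derive L b.
Proof.
  intros Hm HL Hb HSb.
  assert (HL' := HL). destruct HL' as [H1 [Hlim [eps [Heps Hpos]]]].
  assert (Hb0 : 0 < b) by (destruct Hb; auto).
  assert (Hdom : forall t, 0 < t <= b -> inDom k t).
  { intros t Ht. apply (dom_down k t b); auto; lra. }
  assert (HSlt : forall t, 0 < t < b -> sinK k t < m).
  { intros t Ht. assert (sinK k t < sinK k b) by (apply sinK_lt; auto; lra). lra. }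
  set (p := fun t => sinK k t * Derive L t).
  set (p' := fun t => (m ^ 2 - sinK k t ^ 2) * L t / sinK k t).
  assert (Hp : forall t, 0 < t <= b -> is_derive p t (p' t)).
  { intros t Ht. apply (p_deriv k m L t HL (Hdom t Ht)). }
  set (d := Rmin eps b).
  assert (Hd1 : d <= eps) by apply Rmin_l. assert (Hd2 : d <= b) by apply Rmin_r.
  assert (Hd0 : 0 < d) by (apply Rmin_pos; lra).
  assert (Hp'pos : forall t, 0 < t < d -> 0 < p' t).
  { intros t Ht. destruct (dom_facts k t (Hdom t ltac:(lra))) as [HS HC].
    assert (HLt : 0 < L t) by (apply Hpos; lra).
    assert (HSm := HSlt t ltac:(lra)).
    unfold p'. apply Rdiv_lt_0_compat; auto. apply Rmult_lt_0_compat; auto. nra. }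
  assert (HA : exists t1, 0 < t1 < d /\ 0 < Derive L t1).
  { destruct (Classical_Prop.classic (exists t1, 0 < t1 < d /\ 0 < Derive L t1)) as [h|h]; auto.
    exfalso.
    assert (Hneg : forall t, 0 < t < d -> Derive L t <= 0).
    { intros t Ht. destruct (Rle_lt_dec (Derive L t) 0); auto. exfalso. apply h. exists t; auto. }
    set (h0 := d / 2). set (t' := 3 * d / 4).
    assert (Hlt : p h0 < p t').
    { apply (incr_lt p p'). unfold h0, t'; lra.
      intros x Hx. apply Hp. unfold h0, t' in Hx; lra.
      intros x Hx. apply Hp'pos. unfold h0, t' in Hx; lra. }
    assert (Ht' : p t' <= 0).
    { unfold p. destruct (dom_facts k t' (Hdom t' ltac:(unfold t'; lra))) as [HS HC].
      assert (Derive L t' <= 0) by (apply Hneg; unfold t'; lra). nra. }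
    apply (logdiv k m L h0 (- p h0) HL). apply Hdom; unfold h0; lra. lra.
    intros t Ht. destruct (dom_facts k t (Hdom t ltac:(unfold h0 in Ht; lra))) as [HS HC].
    assert (Hpt : p t <= p h0).
    { apply (incr_le p p'). lra.
      intros x Hx. apply Hp. unfold h0 in *; lra.
      intros x Hx. left. apply Hp'pos. unfold h0 in *; lra. }
    apply le_div; auto. rewrite Ropp_involutive, Rmult_comm. exact Hpt. }
  destruct HA as [t1 [Ht1 HDt1]].
  set (phi := fun t => p t * L t).
  set (phi' := fun t => p' t * L t + p t * Derive L t).
  assert (Hphi : forall t, t1 <= t <= b -> 0 < phi t1 <= phi t).
  { intros t Ht.
    assert (HLt1 : 0 < L t1) by (apply Hpos; lra).
    destruct (dom_facts k t1 (Hdom t1 ltac:(lra))) as [HS1 HC1].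
    split. unfold phi, p. apply Rmult_lt_0_compat; auto. apply Rmult_lt_0_compat; auto.
    apply (incr_le phi phi'). lra.
    intros x Hx. unfold phi, phi'. apply D_mult. apply Hp; lra. apply (L_deriv k m); auto. apply Hdom; lra.
    intros x Hx. destruct (dom_facts k x (Hdom x ltac:(lra))) as [HS HC].
    assert (HSm := HSlt x ltac:(lra)).
    unfold phi', p', p.
    assert (0 <= (m ^ 2 - sinK k x ^ 2) * L x / sinK k x * L x).
    { replace ((m ^ 2 - sinK k x ^ 2) * L x / sinK k x * L x) with (((m ^ 2 - sinK k x ^ 2) * (L x * L x)) / sinK k x) by (field; lra).
      apply Rdiv_le_0_compat; auto. apply Rmult_le_pos; nra. }
    nra. }
  assert (HLb : 0 < L b).
  { destruct (Rle_lt_dec (L b) 0) as [h|h]; auto. exfalso.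
    assert (Hpb := Hphi b ltac:(lra)).
    assert (HLb0 : L b <> 0) by (intro e; unfold phi in Hpb; rewrite e in Hpb; lra).
    destruct (Ranalysis5.IVT_interv (fun x => - L x) t1 b) as [z [Hz Hz0]].
    intros a Ha. apply (D_cont _ _ (- Derive L a)). apply D_opp. apply (L_deriv k m); auto. apply Hdom; lra.
    lra. assert (0 < L t1) by (apply Hpos; lra). lra. lra.
    assert (Hpz := Hphi z Hz). unfold phi in Hpz. assert (Lz : L z = 0) by lra. rewrite Lz, Rmult_0_r in Hpz. lra. }
  split; auto.
  assert (Hpb := Hphi b ltac:(lra)). unfold phi, p in Hpb.
  destruct (dom_facts k b Hb) as [HS HC].
  destruct (Rle_lt_dec (Derive L b) 0) as [h|h]; auto.
  assert (sinK k b * Derive L b <= 0) by nra. nra.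
Qed.

Lemma NZ (k m : R) (L : R -> R) (r : R) : 0 < m -> is_L k m L -> inDom k r -> L r = 0 -> Derive L r = 0 -> False.
Proof.
  intros Hm HL Hr HLr HDr.
  assert (HL' := HL). destruct HL' as [H1 [Hlim [eps [Heps Hpos]]]].
  assert (Hr0 : 0 < r) by (destruct Hr; auto).
  set (a := Rmin eps r / 2).
  assert (Ha1 : Rmin eps r <= eps) by apply Rmin_l. assert (Ha2 : Rmin eps r <= r) by apply Rmin_r.
  assert (Ha0 : 0 < Rmin eps r) by (apply Rmin_pos; lra).
  assert (Ha : 0 < a < r) by (unfold a; lra).
  assert (HLa : 0 < L a) by (apply Hpos; unfold a; lra).
  assert (Hdom : forall t, a <= t <= r -> inDom k t).
  { intros t Ht. apply (dom_down k t r); auto; lra. }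
  destruct (dom_facts k a (Hdom a ltac:(lra))) as [HSa _].
  destruct (dom_facts k r Hr) as [HSr _].
  set (K0 := (1 + m ^ 2) / sinK k a + sinK k r).
  set (p := fun t => sinK k t * Derive L t).
  set (p' := fun t => (m ^ 2 - sinK k t ^ 2) * L t / sinK k t).
  set (E := fun t => L t * L t + p t * p t).
  set (E' := fun t => Derive L t * L t + L t * Derive L t + (p' t * p t + p t * p' t)).
  set (G := fun t => E t * exp (K0 * t)).
  set (G' := fun t => E' t * exp (K0 * t) + E t * (exp (K0 * t) * K0)).
  assert (HG : G a <= G r).
  { apply (incr_le G G'). lra.
    { intros x Hx. unfold G, G'. apply (D_mult E (fun t => exp (K0 * t))).
    - unfold E, E'. apply D_plus; apply D_mult; try (apply (L_deriv k m); auto; apply Hdom; lra);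
        apply (p_deriv k m L x HL); apply Hdom; lra.
    - assert (h : is_derive (fun y : R => exp (K0 * y)) x (exp (K0 * x) * K0)) by (auto_derive; auto; ring).
      exact h. }
    - intros x Hx. destruct (dom_facts k x (Hdom x ltac:(lra))) as [HS HC].
      assert (HSax : sinK k a <= sinK k x) by (apply sinK_le; [apply Hdom|..]; lra).
      assert (HSxr : sinK k x <= sinK k r) by (apply sinK_le; auto; lra).
      set (u := (1 + m ^ 2) / sinK k x - sinK k x).
      assert (HE' : E' x = 2 * L x * p x * u) by (unfold E', p', p, u; field; lra).
      assert (Hu1 : u <= K0).
      { unfold u, K0.
        assert ((1 + m ^ 2) / sinK k x <= (1 + m ^ 2) / sinK k a).
        { unfold Rdiv. apply Rmult_le_compat_l. nra. apply Rinv_le_contravar; auto. }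
        lra. }
      assert (Hu2 : - K0 <= u).
      { unfold u, K0.
        assert (0 <= (1 + m ^ 2) / sinK k x) by (apply Rdiv_le_0_compat; nra).
        assert (0 <= (1 + m ^ 2) / sinK k a) by (apply Rdiv_le_0_compat; nra).
        lra. }
      assert (Hk : 0 <= E' x + K0 * E x).
      { rewrite HE'. unfold E.
        assert (h1 : 0 <= (K0 + u) / 2 * ((L x + p x) * (L x + p x))).
        { apply Rmult_le_pos. lra. apply Rle_0_sqr. }
        assert (h2 : 0 <= (K0 - u) / 2 * ((L x - p x) * (L x - p x))).
        { apply Rmult_le_pos. lra. apply Rle_0_sqr. }
        replace (2 * L x * p x * u + K0 * (L x * L x + p x * p x)) with
          ((K0 + u) / 2 * ((L x + p x) * (L x + p x)) + (K0 - u) / 2 * ((L x - p x) * (L x - p x))) by field.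
        lra. }
      assert (0 < exp (K0 * x)) by apply exp_pos.
      unfold G'. nra. }
  unfold G, E, p in HG. rewrite HLr, HDr in HG.
  assert (0 < exp (K0 * a)) by apply exp_pos.
  assert (0 < L a * L a) by nra.
  assert (0 <= sinK k a * Derive L a * (sinK k a * Derive L a)) by nra.
  nra.
Qed.

Lemma sonin (k m : R) (L : R -> R) (r1 r2 : R) : 0 < m -> is_L k m L -> inDom k r1 -> inDom k r2 -> r1 < r2 ->
  m < sinK k r1 -> Derive L r1 = 0 -> Derive L r2 = 0 -> L r2 * L r2 < L r1 * L r1.
Proof.
  intros Hm HL Hr1 Hr2 H12 HSm HD1 HD2.
  assert (Hr10 : 0 < r1) by (destruct Hr1; auto).
  assert (Hdom : forall t, r1 <= t <= r2 -> inDom k t).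
  { intros t Ht. apply (dom_down k t r2); auto; lra. }
  assert (HSgt : forall t, r1 <= t <= r2 -> m < sinK k t).
  { intros t Ht. assert (sinK k r1 <= sinK k t) by (apply sinK_le; [apply Hdom; lra|lra|lra]). lra. }
  set (p := fun t => sinK k t * Derive L t).
  set (p' := fun t => (m ^ 2 - sinK k t ^ 2) * L t / sinK k t).
  set (S2 := fun t => sinK k t * sinK k t + - (m * m)).
  set (F := fun t => L t * L t + (fun t => p t * p t) t / S2 t).
  set (F' := fun t => - 2 * (p t * p t) * sinK k t * cosK k t / (S2 t ^ 2)).
  assert (HF : forall t, r1 <= t <= r2 -> is_derive F t (F' t)).
  { intros t Ht. destruct (dom_facts k t (Hdom t Ht)) as [HS HC].
    assert (HS2 : S2 t <> 0) by (assert (HH := HSgt t Ht); unfold S2; nra).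
    assert (Hp : is_derive p t (p' t)) by (apply (p_deriv k m L t HL (Hdom t Ht))).
    assert (HLd := L_deriv k m L t HL (Hdom t Ht)).
    assert (Hc0 : is_derive (fun _ : R => - (m * m)) t 0) by (apply (is_derive_const (V:=R_NormedModule))).
    assert (HS2d : is_derive S2 t (cosK k t * sinK k t + sinK k t * cosK k t + 0)).
    { unfold S2. apply (D_plus (fun t => sinK k t * sinK k t) (fun _ => - (m * m))); auto.
      apply D_mult; apply sinK_deriv. }
    unfold F. eapply D_eq.
    apply (D_plus (fun t => L t * L t) (fun t => p t * p t / S2 t)).
    apply D_mult; exact HLd.
    apply (is_derive_div (fun t => p t * p t) S2). apply D_mult; exact Hp. exact HS2d. exact HS2.
    unfold F', p', p. unfold S2 in *. field. split; lra. }
  assert (HF'le : forall t, r1 < t < r2 -> F' t <= 0).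
  { intros t Ht. destruct (dom_facts k t (Hdom t ltac:(lra))) as [HS HC].
    assert (HS2 : 0 < S2 t) by (assert (HH := HSgt t ltac:(lra)); unfold S2; nra).
    assert (h : 0 <= (p t * p t) * sinK k t * cosK k t / (S2 t ^ 2)).
    { apply Rdiv_le_0_compat. assert (0 <= p t * p t) by apply Rle_0_sqr.
      apply Rmult_le_pos; [apply Rmult_le_pos|]; lra. apply pow_lt; lra. }
    unfold F'. unfold Rdiv in *. lra. }
  assert (Hdec : forall x y, r1 <= x -> x <= y -> y <= r2 -> F y <= F x).
  { intros x y Hx Hxy Hy. assert (- F x <= - F y); [|lra].
    apply (incr_le (fun t => - F t) (fun t => - F' t)). lra.
    intros z Hz. apply D_opp. apply HF. lra.
    intros z Hz. assert (F' z <= 0) by (apply HF'le; lra). lra. }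
  assert (HF1 : F r1 = L r1 * L r1) by (unfold F, p; rewrite HD1; unfold Rdiv; ring).
  assert (HF2 : F r2 = L r2 * L r2) by (unfold F, p; rewrite HD2; unfold Rdiv; ring).
  destruct (Rlt_le_dec (L r2 * L r2) (L r1 * L r1)) as [h|h]; auto. exfalso.
  assert (Hconst : forall t, r1 < t < r2 -> F t = F r1).
  { intros t Ht. assert (F t <= F r1) by (apply Hdec; lra).
    assert (F r2 <= F t) by (apply Hdec; lra). lra. }
  assert (Hp0 : forall t, r1 < t < r2 -> p t = 0).
  { intros t Ht. assert (HF't := loc_const_deriv F r1 r2 t (F r1) (F' t) Ht Hconst (HF t ltac:(lra))).
    destruct (dom_facts k t (Hdom t ltac:(lra))) as [HS HC].
    assert (HS2 : 0 < S2 t) by (assert (HH := HSgt t ltac:(lra)); unfold S2; nra).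
    unfold F' in HF't.
    assert (e : p t * p t * sinK k t * cosK k t = 0).
    { assert (e2 : -2 * (p t * p t) * sinK k t * cosK k t = 0).
      { apply (Rmult_eq_reg_r (/ S2 t ^ 2)). rewrite Rmult_0_l. exact HF't.
        apply Rinv_neq_0_compat. apply pow_nonzero. lra. }
      lra. }
    assert (p t * p t = 0).
    { destruct (Rmult_integral _ _ e) as [e1|e1]; [|lra].
      destruct (Rmult_integral _ _ e1) as [e3|e3]; [auto|lra]. }
    apply Rsqr_0_uniq. exact H. }
  set (t0 := (r1 + r2) / 2).
  assert (Ht0 : r1 < t0 < r2) by (unfold t0; lra).
  destruct (dom_facts k t0 (Hdom t0 ltac:(lra))) as [HS HC].
  assert (Hp't0 := loc_const_deriv p r1 r2 t0 0 (p' t0) Ht0 Hp0 (p_deriv k m L t0 HL (Hdom t0 ltac:(lra)))).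
  assert (HH := HSgt t0 ltac:(lra)).
  assert (HL0 : L t0 = 0).
  { unfold p' in Hp't0.
    assert (e : (m ^ 2 - sinK k t0 ^ 2) * L t0 = 0).
    { apply (Rmult_eq_reg_r (/ sinK k t0)). rewrite Rmult_0_l. exact Hp't0.
      apply Rinv_neq_0_compat. lra. }
    destruct (Rmult_integral _ _ e) as [e1|e1]; auto. nra. }
  assert (HD0 : Derive L t0 = 0).
  { assert (e := Hp0 t0 Ht0). unfold p in e.
    destruct (Rmult_integral _ _ e) as [e1|e1]; auto. lra. }
  apply (NZ k m L t0 Hm HL (Hdom t0 ltac:(lra)) HL0 HD0).
Qed.

Theorem mainTheorem3 (k m : R) (L : R -> R) :
  0 < m -> is_L k m L ->
  (forall r1 r2 : R,
     inDom k r1 -> inDom k r2 -> r1 < r2 ->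
     local_extremum L r1 -> local_extremum L r2 ->
     Rabs (L r2) < Rabs (L r1))
  /\
  (forall r1 : R,
     inDom k r1 -> local_extremum L r1 ->
     (forall r, inDom k r -> r < r1 -> ~ local_extremum L r) ->
     sinK_inv k m <= r1).
Proof.
  intros Hm HL.
  assert (Hext : forall r, inDom k r -> local_extremum L r -> Derive L r = 0 /\ m < sinK k r).
  { intros r Hr He. assert (HD : Derive L r = 0) by (apply (fermat L r); auto; apply (L_deriv k m); auto).
    split; auto. destruct (Rlt_le_dec m (sinK k r)) as [h|h]; auto.
    destruct (core k m L r Hm HL Hr h) as [_ h2]. lra. }
  split.
  - intros r1 r2 Hr1 Hr2 H12 He1 He2.
    destruct (Hext r1 Hr1 He1) as [HD1 HS1]. destruct (Hext r2 Hr2 He2) as [HD2 _].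
    apply Rsqr_lt_abs_0. unfold Rsqr. apply (sonin k m L r1 r2); auto.
  - intros r1 Hr1 He1 _. destruct (Hext r1 Hr1 He1) as [_ HS1]. apply inv_le; auto.
Qed.
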